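(* There exist finite-dimensional real representations $V$ and $U$ of $SL(2,\mathbb{R})$, an $SL(2,\mathbb{R})$-invariant subset $D\subseteq V$, a continuous $SL(2,\mathbb{R})$-equivariant function $F:D\to U$, and a compact subset $K\subseteq D$ such that there is no sequence of functions of the form $h_k\cdot P_k$, with $P_k:V\to U$ an $SL(2,\mathbb{R})$-equivariant polynomial map and $h_k:D\to\mathbb{R}$ an $SL(2,\mathbb{R})$-invariant function, that converges pointwise to $F$ on $K$.
   Context: A map $F$ between sets on which $SL(2,\mathbb{R})$ acts (linearly on representations) is equivariant if $F(g\cdot v)=g\cdot F(v)$ for all $g\in SL(2,\mathbb{R})$ and $v$ in its domain; a real-valued function $h$ is invariant if $h(g\cdot v)=h(v)$. *)

(* Defs.v *)
From mathcomp Require Import all_boot all_order all_algebra.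
From mathcomp Require Import all_classical all_reals all_analysis.
Set Implicit Arguments. Unset Strict Implicit. Unset Printing Implicit Defensive.
Import Order.TTheory GRing.Theory Num.Theory.
Import numFieldNormedType.Exports.
Local Open Scope classical_set_scope.
Local Open Scope ring_scope.

Definition SL2 (R : realType) : set 'M[R]_2 := [set g | \det g = 1].

(* A finite-dimensional real representation of SL(2,R) on R^n (column
   vectors, g acts by v |-> rho g *m v): a continuous group homomorphism
   SL(2,R) -> GL_n(R). *)
Definition is_rep (R : realType) (n : nat) (rho : 'M[R]_2 -> 'M[R]_n) : Prop :=
  rho 1%:M = 1%:M /\
  (forall g h, SL2 g -> SL2 h -> rho (g *m h) = rho g *m rho h) /\
  {within @SL2 R, continuous rho}.

Inductive poly_fun (R : realType) (n : nat) : ('cV[R]_n -> R) -> Prop :=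
| poly_const (c : R) : poly_fun (fun _ => c)
| poly_coord (i : 'I_n) : poly_fun (fun v => v i ord0)
| poly_add f g : poly_fun f -> poly_fun g -> poly_fun (fun v => f v + g v)
| poly_mul f g : poly_fun f -> poly_fun g -> poly_fun (fun v => f v * g v).

Definition poly_map (R : realType) (n m : nat) (P : 'cV[R]_n -> 'cV[R]_m) : Prop :=
  forall i : 'I_m, poly_fun (fun v => P v i ord0).

(* Main.v *)
Require Import Defs.
From mathcomp Require Import all_boot all_order all_algebra.
From mathcomp Require Import all_classical all_reals all_analysis.
From mathcomp Require Import ring lra.
Import Order.TTheory GRing.Theory Num.Theory.
Import numFieldNormedType.Exports.
Local Open Scope classical_set_scope.
Local Open Scope ring_scope.

Section S.
Variable R : realType.

Definition o1 : 'I_2 := ord_max.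
Definition f1 (i : 'I_4) : 'I_2 := if (i < 2)%N then ord0 else o1.
Definition f2 (i : 'I_4) : 'I_2 := if odd i then o1 else ord0.
Definition rho (g : 'M[R]_2) : 'M[R]_4 :=
  \matrix_(i, j) (g (f1 i) (f1 j) * g (f2 i) (f2 j)).

Lemma sum2 (F : 'I_2 -> R) : \sum_(i < 2) F i = F ord0 + F o1.
Proof. by rewrite big_ord_recl big_ord1; congr (_ + F _); apply: val_inj. Qed.

Lemma sum4 (F : 'I_4 -> R) : \sum_(i < 4) F i =
  F (@Ordinal 4 0 isT) + F (@Ordinal 4 1 isT) + F (@Ordinal 4 2 isT) + F (@Ordinal 4 3 isT).
Proof.
rewrite !big_ord_recl big_ord0 addr0 !addrA.
by congr (F _ + F _ + F _ + F _); apply: val_inj.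

Qed.

Lemma rhoM g h : rho (g *m h) = rho g *m rho h.
Proof.
apply/matrixP => i j; rewrite !mxE sum4 !mxE !sum2 /f1 /f2 /=.
ring.
Qed.

Lemma det22 (g : 'M[R]_2) : \det g = g ord0 ord0 * g o1 o1 - g ord0 o1 * g o1 ord0.
Proof.
rewrite (expand_det_row _ ord0) sum2 /cofactor !det_mx11 !mxE /=.
rewrite expr0 expr1 mul1r mulN1r.
have -> : lift ord0 ord0 = o1 :> 'I_2 by apply/val_inj.
have -> : lift o1 ord0 = ord0 :> 'I_2 by apply/val_inj.
ring.
Qed.

Lemma rho1 : rho 1%:M = 1%:M.
Proof.
apply/matrixP => i j; rewrite !mxE.
case: i => [[|[|[|[|//]]]] Hi]; case: j => [[|[|[|[|//]]]] Hj];
  rewrite /f1 /f2 /= ?mulr1n ?mulr0n ?mulr0 ?mul0r ?mulr1 //.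
Qed.

Lemma cvg_mx_entries {T} (F : set_system T) {FF : Filter F} m n
  (f : T -> 'M[R]_(m,n)) (M : 'M[R]_(m,n)) :
  (forall i j, (fun x => f x i j) @ F --> M i j) -> f @ F --> M.
Proof.
move=> H; apply/cvgrPdist_le => /= e e0.
near=> x.
rewrite /Num.Def.normr/= mx_normrE (bigmax_le _ (ltW e0))//= => i _.
rewrite !mxE/=.
move: i; near: x; apply: filter_forall => /= i.
exact: ((cvgrPdist_le _ _).1 (H i.1 i.2)).
Unshelve. all: by end_near. Qed.

Lemma rho_cont : continuous rho.
Proof.
move=> x; apply: (@cvg_mx_entries _ (nbhs x) (@mx_nbhs_filter 2 2 _ x)) => i j.
rewrite mxE.
have -> : (fun y : 'M[R]_2 => rho y i j) =
   (fun y => y (f1 i) (f1 j) * y (f2 i) (f2 j)).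
  by apply/funext => y; rewrite mxE.
exact: (cvgM (@coord_continuous R 2 2 (f1 i) (f1 j) x) (@coord_continuous R 2 2 (f2 i) (f2 j) x)).
Qed.

Lemma rho_rep : is_rep rho.
Proof.
split; first exact: rho1.
split; first by move=> g h _ _; exact: rhoM.
exact/continuous_subspaceT/rho_cont.
Qed.

Definition tens (u : 'cV[R]_2) : 'cV[R]_4 := \col_i (u (f1 i) ord0 * u (f2 i) ord0).

Lemma rho_tens g u : rho g *m tens u = tens (g *m u).
Proof.
apply/matrixP => i j; rewrite !mxE sum4 !mxE !sum2 /f1 /f2 /=; ring.
Qed.

Definition i0 : 'I_4 := @Ordinal 4 0 isT.
Definition i1 : 'I_4 := @Ordinal 4 1 isT.
Definition i2 : 'I_4 := @Ordinal 4 2 isT.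
Definition i3 : 'I_4 := @Ordinal 4 3 isT.

Definition omega : 'cV[R]_4 := \col_i ((i == i1)%:R - (i == i2)%:R).

Lemma rho_omega g : \det g = 1 -> rho g *m omega = omega.
Proof.
rewrite det22 => H.
apply/matrixP => i j; rewrite !mxE sum4 !mxE /=.
case: i => [[|[|[|[|//]]]] Hi]; rewrite /f1 /f2 /= ?mulr1n ?mulr0n;
 rewrite -?[in RHS]H; ring.
Qed.

Definition sx (x : 'cV[R]_4) := x i0 ord0 + x i3 ord0.

Lemma sx_tens u : sx (tens u) = u ord0 ord0 ^+ 2 + u o1 ord0 ^+ 2.
Proof. by rewrite /sx !mxE /f1 /f2 /= !expr2. Qed.

Lemma cV2_neq0 (u : 'cV[R]_2) : u != 0 -> 0 < u ord0 ord0 ^+ 2 + u o1 ord0 ^+ 2.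
Proof.
move=> Hu.
have : (u ord0 ord0 != 0) || (u o1 ord0 != 0).
  apply: contraR Hu; rewrite negb_or !negbK => /andP[/eqP a /eqP b].
  apply/eqP/matrixP => i j; rewrite mxE (ord1 j).
  case: i => [[|[|//]] Hi].
    by rewrite -a; congr (u _ _); apply: val_inj.
  by rewrite -b; congr (u _ _); apply: val_inj.
have ha := sqr_ge0 (u ord0 ord0); have hb := sqr_ge0 (u o1 ord0).
case/orP => H.
  have : 0 < u ord0 ord0 ^+ 2 by rewrite lt_def sqrf_eq0 H sqr_ge0.
  lra.
have : 0 < u o1 ord0 ^+ 2 by rewrite lt_def sqrf_eq0 H sqr_ge0.
lra.
Qed.


Definition Dset : set 'cV[R]_4 :=
  [set x | exists u : 'cV[R]_2, u != 0 /\ (x = tens u \/ x = - tens u)].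

Definition Ff (x : 'cV[R]_4) : 'cV[R]_4 := if 0 < sx x then x else omega.

Lemma mul_neq0 (g : 'M[R]_2) (u : 'cV[R]_2) : \det g = 1 -> u != 0 -> g *m u != 0.
Proof.
move=> H Hu; apply: contra Hu => /eqP E.
have Gu : g \in unitmx by rewrite unitmxE H unitr1.
by rewrite -(mulKmx Gu u) E mulmx0.
Qed.

Lemma sxN x : sx (- x) = - sx x.
Proof. rewrite /sx !mxE; ring. Qed.

Lemma sx_pos (u : 'cV[R]_2) : u != 0 -> 0 < sx (tens u).
Proof. by move=> Hu; rewrite sx_tens; exact: cV2_neq0. Qed.

Lemma D_inv g v : SL2 g -> Dset v -> Dset (rho g *m v).
Proof.
move=> Hg [u [Hu [->|->]]]; exists (g *m u); split; try exact: mul_neq0.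
  by left; rewrite rho_tens.
by right; rewrite mulmxN rho_tens.
Qed.

Lemma F_equiv g v : SL2 g -> Dset v -> Ff (rho g *m v) = rho g *m Ff v.
Proof.
move=> Hg [u [Hu [->|->]]]; rewrite /Ff.
  by rewrite rho_tens (@sx_pos _ (@mul_neq0 g u Hg Hu)) (@sx_pos _ Hu) rho_tens.
rewrite mulmxN rho_tens !sxN.
have h1 := @sx_pos _ Hu; have h2 := @sx_pos _ (@mul_neq0 g u Hg Hu).
rewrite !ltNge !oppr_le0 !ltW //=.
by rewrite rho_omega.
Qed.

Lemma sx_cont : continuous sx.
Proof.
move=> x.
exact: (cvgD (@coord_continuous R 4 1 i0 ord0 x) (@coord_continuous R 4 1 i3 ord0 x)).
Qed.

Lemma F_cont : {within Dset, continuous Ff}.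
Proof.
apply: continuous_in_subspaceT => x; rewrite inE => -[u [Hu Hx]].
have hs : sx x != 0.
  case: Hx => ->; first by rewrite gt_eqF // sx_pos.
  by rewrite sxN oppr_eq0 gt_eqF // sx_pos.
case: (ltgtP (sx x) 0) hs => // H _.
  have Hn : \forall y \near x, sx y < 0 := sx_cont x _ (lt_nbhsl H).
  have E : {near x, (fun=> omega) =1 Ff}.
    by near=> y; rewrite /Ff ltNge ltW //; near: y.
  rewrite /continuous_at {2}/Ff ltNge ltW //=.
  exact: cvg_trans (near_eq_cvg E) (cvg_cst _).
have Hn : \forall y \near x, 0 < sx y := sx_cont x _ (lt_nbhsr H).
have E : {near x, id =1 Ff}.
  by near=> y; rewrite /Ff ifT //; near: y.
rewrite /continuous_at {2}/Ff H.
exact: cvg_trans (near_eq_cvg E) cvg_id.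
Unshelve. all: by end_near. Qed.

Definition e1 : 'cV[R]_2 := \col_i (i == ord0)%:R.
Definition t0 : 'cV[R]_4 := tens e1.
Definition Kset : set 'cV[R]_4 := [set t0] `|` [set - t0].

Lemma e1_neq0 : e1 != 0.
Proof. by apply/eqP => /matrixP /(_ ord0 ord0) /eqP; rewrite !mxE eqxx /= oner_eq0. Qed.

Lemma K_sub : Kset `<=` Dset.
Proof. by move=> x [->|->]; exists e1; split; [exact: e1_neq0| |exact: e1_neq0|]; auto. Qed.

Lemma K_compact : compact Kset.
Proof. by apply: compactU; apply: compact_set1. Qed.

Lemma poly_line n (v0 : 'cV[R]_n) f : poly_fun f ->
  exists p : {poly R}, forall l, f (l *: v0) = p.[l].
Proof.
elim => [c | i | f1 g1 _ [p Hp] _ [q Hq] | f1 g1 _ [p Hp] _ [q Hq]].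
- by exists c%:P => l; rewrite hornerC.
- by exists ((v0 i ord0)%:P * 'X) => l; rewrite !mxE hornerCM hornerX mulrC.
- by exists (p + q) => l; rewrite Hp Hq hornerD.
- by exists (p * q) => l; rewrite Hp Hq hornerM.
Qed.

Lemma poly_pos0 (p : {poly R}) : (forall l, 0 < l -> p.[l] = 0) -> p = 0.
Proof.
move=> H; apply/eqP; apply: contraT => pn0.
have := @max_poly_roots _ p (mkseq (fun i => i.+1%:R) (size p)) pn0.
rewrite size_mkseq ltnn; apply.
  apply/allP => x /mapP [i _ ->]; apply/rootP; apply: H; exact: ltr0Sn.
rewrite map_inj_uniq ?iota_uniq // => i j /eqP; rewrite eqr_nat eqSS => /eqP.
done.
Qed.


Lemma line_ext (p : {poly R}) (a b : R) :
  (forall l, 0 < l -> p.[l] = a * l + b) -> p.[-1] = - a + b.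
Proof.
move=> H.
have E : p - (a%:P * 'X + b%:P) = 0.
  apply: poly_pos0 => l Hl.
  by rewrite hornerD hornerN hornerD hornerCM hornerX hornerC H // subrr.
have -> : p = a%:P * 'X + b%:P by apply/eqP; rewrite -subr_eq0 E.
by rewrite hornerD hornerCM hornerX hornerC mulrN1.
Qed.

Lemma entry_cvg (u : nat -> 'cV[R]_4) (l : 'cV[R]_4) i :
  u @ \oo --> l -> (fun k => u k i ord0) @ \oo --> l i ord0.
Proof. by move=> H; exact: (cvg_comp _ _ H (@coord_continuous R 4 1 i ord0 l)). Qed.

Lemma entry_scale (h : nat -> R) (u : nat -> 'cV[R]_4) (l : 'cV[R]_4) i :
  (fun k => h k *: u k) @ \oo --> l -> (fun k => h k * u k i ord0) @ \oo --> l i ord0.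
Proof.
move=> H; have := entry_cvg _ _ i H.
by have -> : (fun k => (h k *: u k) i ord0) = (fun k => h k * u k i ord0)
  by apply/funext => k; rewrite mxE.
Qed.

Definition dm (r : R) : 'M[R]_2 :=
  \matrix_(i, j) (if (i : nat) == j then (if (i : nat) == 0%N then r else r^-1) else 0).

Lemma dm_SL2 r : r != 0 -> SL2 (dm r).
Proof. by move=> Hr; rewrite /SL2 /= det22 !mxE /= mulfV // mul0r subr0. Qed.

Lemma rho_dm_t0 r : rho (dm r) *m t0 = (r ^+ 2) *: t0.
Proof.
rewrite /t0 rho_tens; apply/matrixP => i j.
rewrite !mxE !sum2 !mxE /=.
case: i => [[|[|[|[|//]]]] Hi]; rewrite /f1 /f2 /= ?mulr1n ?mulr0n; ring.
Qed.

Lemma main : exists (n m : nat) (rhoV : 'M[R]_2 -> 'M[R]_n) (rhoU : 'M[R]_2 -> 'M[R]_m),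
    is_rep rhoV /\ is_rep rhoU /\
    exists (D : set 'cV[R]_n) (F : 'cV[R]_n -> 'cV[R]_m) (K : set 'cV[R]_n),
      (forall g v, SL2 g -> D v -> D (rhoV g *m v)) /\
      {within D, continuous F} /\
      (forall g v, SL2 g -> D v -> F (rhoV g *m v) = rhoU g *m F v) /\
      K `<=` D /\ compact K /\
      ~ exists (h : nat -> 'cV[R]_n -> R) (P : nat -> 'cV[R]_n -> 'cV[R]_m),
          (forall k, poly_map (P k) /\
             (forall g v, SL2 g -> P k (rhoV g *m v) = rhoU g *m P k v) /\
             (forall g v, SL2 g -> D v -> h k (rhoV g *m v) = h k v)) /\
          (forall x, K x -> (fun k => h k x *: P k x) @ \oo --> F x).
Proof.
exists 4%N, 4%N, rho, rho; split; first exact: rho_rep.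
split; first exact: rho_rep.
exists Dset, Ff, Kset.
split; first exact: D_inv.
split; first exact: F_cont.
split; first exact: F_equiv.
split; first exact: K_sub.
split; first exact: K_compact.
move=> [h [P [HP Hc]]].
have scale k r : r != 0 -> P k ((r ^+ 2) *: t0) = rho (dm r) *m P k t0.
  by move=> Hr; rewrite -rho_dm_t0 (proj1 (proj2 (HP k))) //; apply: dm_SL2.
have pos k l : 0 < l -> P k (l *: t0) = rho (dm (Num.sqrt l)) *m P k t0.
  move=> Hl; rewrite -scale ?sqr_sqrtr ?ltW //.
  by rewrite gt_eqF // sqrtr_gt0.
have neg0 k : P k (- t0) i0 ord0 = - P k t0 i0 ord0.
  have [p Hp] := poly_line _ t0 _ ((proj1 (HP k)) i0).
  rewrite -scaleN1r Hp -[RHS]addr0; apply: line_ext => l Hl.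
  rewrite -Hp pos // mxE sum4 !mxE /f1 /f2 /= addr0.
  rewrite -[l in RHS](@sqr_sqrtr _ l) ?ltW //.
  have : Num.sqrt l != 0 by rewrite gt_eqF // sqrtr_gt0.
  move: (Num.sqrt l) => r Hr; by field.
have neg1 k : P k (- t0) i1 ord0 = P k t0 i1 ord0.
  have [p Hp] := poly_line _ t0 _ ((proj1 (HP k)) i1).
  rewrite -scaleN1r Hp; transitivity (- 0 + P k t0 i1 ord0); last by rewrite oppr0 add0r.
  apply: line_ext => l Hl.
  rewrite -Hp pos // mxE sum4 !mxE /f1 /f2 /=.
  have : Num.sqrt l != 0 by rewrite gt_eqF // sqrtr_gt0.
  move: (Num.sqrt l) => r Hr; by field.
have Ft : Ff t0 = t0 by rewrite /Ff (@sx_pos _ e1_neq0).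
have Fnt : Ff (- t0) = omega.
  by rewrite /Ff sxN ltNge oppr_le0 ltW // (@sx_pos _ e1_neq0).
have C1 : Kset t0 by left.
have C2 : Kset (- t0) by right.
have x1 : (fun k => h k t0 * P k t0 i0 ord0) @ \oo --> (1:R).
  have := entry_scale _ _ _ i0 (Hc _ C1).
  by rewrite Ft !mxE /= mulr1.
have x2 : (fun k => h k t0 * P k t0 i1 ord0) @ \oo --> (0:R).
  have := entry_scale _ _ _ i1 (Hc _ C1).
  by rewrite Ft !mxE /= mulr0.
have y1 : (fun k => h k (- t0) * P k (- t0) i0 ord0) @ \oo --> (0:R).
  have := entry_scale _ _ _ i0 (Hc _ C2).
  by rewrite Fnt !mxE /= subr0.
have y2 : (fun k => h k (- t0) * P k (- t0) i1 ord0) @ \oo --> (1:R).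
  have := entry_scale _ _ _ i1 (Hc _ C2).
  by rewrite Fnt !mxE /= subr0.
have L1 : (fun k => h k t0 * P k t0 i0 ord0) \* (fun k => h k (- t0) * P k (- t0) i1 ord0) @ \oo --> (1 * 1 : R) := cvgM (FF := eventually_filter) x1 y2.
have L2 : (fun k => - (h k t0 * P k t0 i1 ord0 * (h k (- t0) * P k (- t0) i0 ord0))) @ \oo --> (- (0 * 0) : R) := cvgN (FF := eventually_filter) (cvgM (FF := eventually_filter) x2 y1).
have E : ((fun k => h k t0 * P k t0 i0 ord0) \* (fun k => h k (- t0) * P k (- t0) i1 ord0))
   = (fun k => - (h k t0 * P k t0 i1 ord0 * (h k (- t0) * P k (- t0) i0 ord0))).
  by apply/funext => k /=; rewrite neg0 neg1; ring.
rewrite E in L1.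
have := cvg_unique _ L1 L2.
move/(_ (@norm_hausdorff _ R^o)) => H1.
have := H1 (fmap_proper_filter _ eventually_filter).
rewrite mulr1 mulr0 oppr0; lra.
Qed.

End S.

Theorem corollary1 (R : realType) :
  exists (n m : nat) (rhoV : 'M[R]_2 -> 'M[R]_n) (rhoU : 'M[R]_2 -> 'M[R]_m),
    is_rep rhoV /\ is_rep rhoU /\
    exists (D : set 'cV[R]_n) (F : 'cV[R]_n -> 'cV[R]_m) (K : set 'cV[R]_n),
      (forall g v, SL2 g -> D v -> D (rhoV g *m v)) /\
      {within D, continuous F} /\
      (forall g v, SL2 g -> D v -> F (rhoV g *m v) = rhoU g *m F v) /\
      K `<=` D /\ compact K /\
      ~ exists (h : nat -> 'cV[R]_n -> R) (P : nat -> 'cV[R]_n -> 'cV[R]_m),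
          (forall k, poly_map (P k) /\
             (forall g v, SL2 g -> P k (rhoV g *m v) = rhoU g *m P k v) /\
             (forall g v, SL2 g -> D v -> h k (rhoV g *m v) = h k v)) /\
          (forall x, K x -> (fun k => h k x *: P k x) @ \oo --> F x).
Proof. exact: main. Qed.
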